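(* Let $(\mathscr{A},\star')$ be a left-non-degenerate weak RC-system on a quiver $\mathscr{A}$ over $\Lambda$. For composable $a|b$ define $a\rightharpoonup b:=c$ where $c$ is the unique arrow with $b=a\star' c$, and $a\leftharpoonup b:=(a\rightharpoonup b)\star' a$. Then $\sigma\colon a|b\mapsto(a\rightharpoonup b)|(a\leftharpoonup b)$ is a quiver-theoretic Yang--Baxter map on $\mathscr{A}$.
   Context: A weak RC-system $(Q,\star)$ is a quiver with a partial binary operation such that: $x\star y$ is defined only if $\mathfrak{s}(x)=\mathfrak{s}(y)$; whenever $x\star y$ is defined, $y\star x$ is defined, $\mathfrak{s}(x\star y)=\mathfrak{t}(x)$, $\mathfrak{s}(y\star x)=\mathfrak{t}(y)$, $\mathfrak{t}(x\star y)=\mathfrak{t}(y\star x)$; and whenever $x\star y$, $x\star z$, $(x\star y)\star(x\star z)$ are defined, $y\star z$ and $(y\star x)\star(y\star z)$ are defined and $(x\star y)\star(x\star z)=(y\star x)\star(y\star z)$. It is left-non-degenerate if each map $x\star\cdot\colon Q(\mathfrak{s}(x),\Lambda)\to Q(\mathfrak{t}(x),\Lambda)$ is a bijection ($Q(\lambda,\Lambda)$ = arrows with source $\lambda$). A quiver-theoretic Yang--Baxter map is a map $\sigma$ on the set of composable pairs $a|b$ ($\mathfrak{t}(a)=\mathfrak{s}(b)$) preserving the source of the first and target of the second arrow, satisfying $(\sigma\otimes\mathrm{id})(\mathrm{id}\otimes\sigma)(\sigma\otimes\mathrm{id})=(\mathrm{id}\otimes\sigma)(\sigma\otimes\mathrm{id})(\mathrm{id}\otimes\sigma)$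 on composable triples. *)

(* Defs.v *)
From Stdlib Require Import ClassicalEpsilon.

Set Implicit Arguments.

Section Quiver.
(* A quiver over the vertex set V (= Lambda): arrows A with source s and target t.
   The partial binary operation star is encoded as  star : A -> A -> option A
   (x * y defined iff star x y = Some _). *)
Variables (V A : Type) (s t : A -> V) (star : A -> A -> option A).

Definition defined (x y : A) : Prop := exists z, star x y = Some z.

Definition weak_RC_system : Prop :=
  (forall x y, defined x y -> s x = s y) /\
  (forall x y xy, star x y = Some xy ->
     exists yx, star y x = Some yx /\ s xy = t x /\ s yx = t y /\ t xy = t yx) /\
  (forall x y z xy xz u,
     star x y = Some xy -> star x z = Some xz -> star xy xz = Some u ->
     exists yx yz, star y x = Some yx /\ star y z = Some yz /\ star yx yz = Some u).

Definition left_non_degenerate : Prop :=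
  forall x,
    (forall y, s y = s x -> exists z, star x y = Some z /\ s z = t x) /\
    (forall y1 y2 z, s y1 = s x -> s y2 = s x ->
        star x y1 = Some z -> star x y2 = Some z -> y1 = y2) /\
    (forall z, s z = t x -> exists y, s y = s x /\ star x y = Some z).

Definition rharp (a b : A) : A :=
  epsilon (inhabits a) (fun c => s c = s a /\ star a c = Some b).

(* a <- b := (a -> b) * a  (default value a if undefined; irrelevant on composable pairs) *)
Definition lharp (a b : A) : A :=
  match star (rharp a b) a with Some d => d | None => a end.

Definition sigma_RC (p : A * A) : A * A :=
  (rharp (fst p) (snd p), lharp (fst p) (snd p)).

Definition composable (a b : A) : Prop := t a = s b.

Definition sig12 (sg : A * A -> A * A) (x : A * A * A) : A * A * A :=
  let '(a, b, c) := x in let '(a', b') := sg (a, b) in (a', b', c).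
Definition sig23 (sg : A * A -> A * A) (x : A * A * A) : A * A * A :=
  let '(a, b, c) := x in let '(b', c') := sg (b, c) in (a, b', c').

Definition quiver_YB_map (sg : A * A -> A * A) : Prop :=
  (forall a b, composable a b ->
     composable (fst (sg (a, b))) (snd (sg (a, b))) /\
     s (fst (sg (a, b))) = s a /\ t (snd (sg (a, b))) = t b) /\
  (forall a b c, composable a b -> composable b c ->
     sig12 sg (sig23 sg (sig12 sg (a, b, c))) =
     sig23 sg (sig12 sg (sig23 sg (a, b, c)))).
End Quiver.

(* Main.v *)
Require Import Defs.
From Stdlib Require Import ClassicalEpsilon.

Section S.
Variables (V A : Type) (s t : A -> V) (star : A -> A -> option A).
Hypothesis H : weak_RC_system s t star.
Hypothesis L : left_non_degenerate s t star.

Lemma tot x y : s y = s x -> exists z, star x y = Some z /\ s z = t x.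
Proof. intros; apply (proj1 (L x)); auto. Qed.

Lemma src x y z : star x y = Some z -> s z = t x.
Proof.
  intros E. destruct H as [H1 [H2 H3]].
  destruct (H2 _ _ _ E) as [yx [_ [? _]]]; auto.
Qed.

Lemma src2 x y z : star x y = Some z -> s y = s x.
Proof.
  intros E. destruct H as [H1 [H2 H3]].
  symmetry; apply H1; exists z; auto.
Qed.

Lemma sigma_eq a u b d : s u = s a -> star a u = Some b -> star u a = Some d ->
  sigma_RC s star (a, b) = (u, d).
Proof.
  intros Hs Eb Ed. unfold sigma_RC, lharp; simpl.
  assert (Hb : s b = t a) by (eapply src; eauto).
  assert (R : rharp s star a b = u).
  { unfold rharp.
    destruct (epsilon_spec (inhabits a) (fun c => s c = s a /\ star a c = Some b))
      as [H1 H2].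
    - exists u; auto.
    - eapply (proj1 (proj2 (L a))); eauto. }
  rewrite R, Ed; reflexivity.
Qed.

Lemma det {x y z1 z2} : star x y = Some z1 -> star x y = Some z2 -> z1 = z2.
Proof. intros E1 E2; rewrite E1 in E2; congruence. Qed.

Lemma cyc x y z xy xz u : star x y = Some xy -> star x z = Some xz -> star xy xz = Some u ->
  forall yx yz, star y x = Some yx -> star y z = Some yz -> star yx yz = Some u.
Proof.
  intros E1 E2 E3 yx yz F1 F2. destruct H as [_ [_ H3]].
  destruct (H3 _ _ _ _ _ _ E1 E2 E3) as [yx' [yz' [G1 [G2 G3]]]].
  rewrite (det F1 G1), (det F2 G2); auto.
Qed.

Theorem main : quiver_YB_map s t (sigma_RC s star).
Proof.
  split.
  - intros a b Hab. unfold composable in *.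
    destruct (proj2 (proj2 (L a)) b (eq_sym Hab)) as [u [Hu Eb]].
    destruct (tot u a (eq_sym Hu)) as [d [Ed Hd]].
    rewrite (sigma_eq a u b d Hu Eb Ed); simpl.
    destruct H as [_ [H2 _]].
    destruct (H2 _ _ _ Eb) as [yx [F [_ [_ T]]]].
    rewrite (det F Ed) in T. auto.
  - intros a b c Hab Hbc. unfold composable in *.
    destruct (proj2 (proj2 (L a)) b (eq_sym Hab)) as [u [Hu Eb]].
    assert (Hsb : s b = t a) by (eapply src; eauto).
    destruct (proj2 (proj2 (L b)) c (eq_sym Hbc)) as [z [Hz Ec]].
    destruct (proj2 (proj2 (L a)) z (eq_trans Hz Hsb)) as [w [Hw Ez]].
    destruct (tot u a (eq_sym Hu)) as [ua [Eua Hua]].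
    destruct (tot u w (eq_trans Hw (eq_sym Hu))) as [uw [Euw Huw]].
    destruct (tot w u (eq_trans Hu (eq_sym Hw))) as [wu [Ewu Hwu]].
    destruct (tot w a (eq_sym Hw)) as [wa [Ewa Hwa]].
    assert (C1 := cyc _ _ _ _ _ _ Eb Ez Ec _ _ Eua Euw).
    assert (Hszb : s b = s z) by (rewrite Hsb; symmetry; eapply src; eauto).
    destruct (tot z b Hszb) as [e [Ee He]].
    assert (C2 := cyc _ _ _ _ _ _ Ez Eb Ee _ _ Ewa Ewu).
    destruct (tot uw ua (eq_trans Hua (eq_sym Huw))) as [f [Ef Hf]].
    assert (C3 := cyc _ _ _ _ _ _ Euw Eua Ef _ _ Ewu Ewa).
    unfold sig12, sig23.
    rewrite (sigma_eq a u b ua Hu Eb Eua).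
    rewrite (sigma_eq ua uw c f (eq_trans Huw (eq_sym Hua)) C1 Ef).
    rewrite (sigma_eq u w uw wu (eq_trans Hw (eq_sym Hu)) Euw Ewu).
    rewrite (sigma_eq b z c e (eq_sym Hszb) Ec Ee).
    rewrite (sigma_eq a w z wa Hw Ez Ewa).
    rewrite (sigma_eq wa wu e f (eq_trans Hwu (eq_sym Hwa)) C2 C3).
    reflexivity.
Qed.
End S.

Theorem proposition6p4 (V A : Type) (s t : A -> V) (star : A -> A -> option A) :
  weak_RC_system s t star ->
  left_non_degenerate s t star ->
  quiver_YB_map s t (sigma_RC s star).
Proof. intros; apply main; auto. Qed.
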